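(* Let $A,B$ be symmetric $m\times m$ real matrices, let $c_1\ge c_2\ge\dots\ge c_m$ be real constants, and let $\sigma$ be a permutation of $\{1,\dots,m\}$. Then $$\sum_{j=1}^m c_{\sigma(j)}\lambda_j(A+B)\le\sum_{j=1}^m c_{\sigma(j)}\lambda_j(A)+\sum_{j=1}^m c_j\lambda_j(B).$$
   Context: For a symmetric $m\times m$ matrix $M$, $\lambda_1(M)\ge\lambda_2(M)\ge\dots\ge\lambda_m(M)$ denote its eigenvalues in decreasing order. *)

(* Defs.v *)
From HB Require Import structures.
From mathcomp Require Import all_boot all_order all_algebra all_fingroup.
Set Implicit Arguments. Unset Strict Implicit. Unset Printing Implicit Defensive.
Import Order.TTheory GRing.Theory Num.Theory.
Local Open Scope ring_scope.

Definition symmetric_mx (R : rcfType) (m : nat) (M : 'M[R]_m) : Prop := M^T = M.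

(* [l] is the list lambda_1(M) >= ... >= lambda_m(M) of the eigenvalues of M,
   counted with (algebraic) multiplicity and in decreasing order, indexed by
   'I_m (index j : 'I_m stands for lambda_{j+1}). *)
Definition eigvals_desc (R : rcfType) (m : nat) (M : 'M[R]_m) (l : 'I_m -> R)
  : Prop :=
  (forall i j : 'I_m, (i <= j)%N -> l j <= l i) /\
  char_poly M = \prod_(i < m) ('X - (l i)%:P).

(* Main.v *)
Require Import Defs.
From HB Require Import structures.
From mathcomp Require Import all_boot all_order all_algebra all_fingroup.
From mathcomp Require Import complex spectral.
From mathcomp Require Import zify ring lra.
Set Implicit Arguments. Unset Strict Implicit. Unset Printing Implicit Defensive.
Import Order.TTheory GRing.Theory Num.Theory Num.Def.
Local Open Scope ring_scope.
Local Open Scope sesquilinear_scope.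

Section Core.
Variable C : numClosedFieldType.

Lemma trC_mul m n p (A : 'M[C]_(m, n)) (B : 'M[C]_(n, p)) :
  (A *m B)^t* = B^t* *m A^t*.
Proof. by rewrite trmx_mul map_mxM. Qed.

Lemma entry_tCdiag m n p (X : 'M[C]_(m, n)) (d : 'I_m -> C) (Y : 'M[C]_(m, p)) a b :
  (X^t* *m diag_mx (\row_i d i) *m Y) a b = \sum_i conjC (X i a) * d i * Y i b.
Proof.
rewrite mul_mx_diag mxE; apply: eq_bigr => i _; rewrite !mxE.
by [].
Qed.

Lemma entry_mul_tC m n p (X : 'M[C]_(m, n)) (Y : 'M[C]_(p, n)) a b :
  (X *m Y^t*) a b = \sum_k X a k * conjC (Y b k).
Proof. by rewrite mxE; apply: eq_bigr => k _; rewrite !mxE. Qed.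

Lemma entry_tC_mul m n p (X : 'M[C]_(m, n)) (Y : 'M[C]_(m, p)) a b :
  (X^t* *m Y) a b = \sum_k conjC (X k a) * Y k b.
Proof. by rewrite mxE; apply: eq_bigr => k _; rewrite !mxE. Qed.


Definition qf m (M : 'M[C]_m) (v : 'rV[C]_m) := (v *m M *m v^t*) 0 0.
Definition nv m (v : 'rV[C]_m) := (v *m v^t*) 0 0.
Definition eigd m (M : 'M[C]_m) (l : 'I_m -> C) :=
  [/\ (forall i, l i \is Num.real), (forall i j : 'I_m, (i <= j)%N -> l j <= l i) &
      char_poly M = \prod_(i < m) ('X - (l i)%:P)].
Definition spec m (M U : 'M[C]_m) (l : 'I_m -> C) :=
  [/\ U *m U^t* = 1%:M, U^t* *m U = 1%:M & M = U^t* *m diag_mx (\row_i l i) *m U].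
Definition herm m (M : 'M[C]_m) := M^t* = M.

Lemma char_poly_similar m (P D : 'M[C]_m) : P \in unitmx ->
  char_poly (invmx P *m D *m P) = char_poly D.
Proof.
move=> Pu.
have E : char_poly_mx (invmx P *m D *m P) =
   map_mx polyC (invmx P) *m char_poly_mx D *m map_mx polyC P.
  rewrite /char_poly_mx mulmxBr mulmxBl -!map_mxM.
  by rewrite mul_mx_scalar -scalemxAl -map_mxM mulVmx // map_mx1 scalemx1.
rewrite /char_poly E !det_mulmx !det_map_mx mulrC mulrA -rmorphM.
by rewrite -det_mulmx mulmxV // det1 mul1r.
Qed.

Lemma spec_unit m (U : 'M[C]_m) : U *m U^t* = 1%:M -> U \in unitmx.
Proof. by move=> /mulmx1_unit []. Qed.

Lemma qf_spec m (M U : 'M[C]_m) l (w : 'rV[C]_m) : spec M U l ->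
  qf M (w *m U) = \sum_j l j * (w 0 j * conjC (w 0 j)).
Proof.
case=> UU _ ->; rewrite /qf trC_mul.
have -> : w *m U *m (U^t* *m diag_mx (\row_i l i) *m U) *m (U^t* *m w^t*)
   = w *m diag_mx (\row_i l i) *m w^t*.
  have K : forall n (A : 'M[C]_(n, m)), A *m U *m U^t* = A.
    by move=> n A; rewrite -mulmxA UU mulmx1.
  by rewrite !mulmxA !K.
rewrite -[w]trmxCK entry_tCdiag trmxCK; apply: eq_bigr => j _.
by rewrite !mxE !conjCK [_ * l j]mulrC -mulrA.
Qed.

Lemma nv_spec m (U : 'M[C]_m) (w : 'rV[C]_m) : U *m U^t* = 1%:M ->
  nv (w *m U) = \sum_j w 0 j * conjC (w 0 j).
Proof.
move=> UU; rewrite /nv trC_mul mulmxA -(mulmxA w) UU mulmx1 entry_mul_tC.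
by [].
Qed.


Lemma mul_pid_entry m (a : 'rV[C]_m) r j :
  (a *m pid_mx r) 0 j = if (j < r)%N then a 0 j else 0.
Proof.
rewrite mxE (bigD1 j) //= big1 => [|k kj]; last first.
  by rewrite !mxE (inj_eq val_inj) (negbTE kj) mulr0.
rewrite !mxE eqxx /= addr0; case: ifP => _; by rewrite ?mulr1 ?mulr0.
Qed.

Lemma mul_copid_entry m (a : 'rV[C]_m) r j :
  (a *m copid_mx r) 0 j = if (j < r)%N then 0 else a 0 j.
Proof.
have := mul_pid_entry a r j; rewrite /copid_mx mulmxBr mulmx1 !mxE => ->.
by case: ifP; rewrite ?subrr ?subr0.
Qed.

Lemma nv_gt0 m (v : 'rV[C]_m) : v != 0 -> 0 < nv v.
Proof.
move=> vnz; have ge : 0 <= nv v.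
  rewrite /nv entry_mul_tC; apply: sumr_ge0 => j _; exact: mul_conjC_ge0.
rewrite lt_def ge andbT; apply: contra vnz.
rewrite /nv entry_mul_tC => /eqP /(psumr_eq0P (fun j _ => mul_conjC_ge0 _)) H.
apply/eqP/rowP => j; rewrite mxE.
by have /eqP := H j isT; rewrite mul_conjC_eq0 => /eqP.
Qed.


Lemma weyl m (X Y Ux Uy : 'M[C]_m) lx ly (c : C) (i : 'I_m) :
  spec X Ux lx -> spec Y Uy ly ->
  (forall i j : 'I_m, (i <= j)%N -> lx j <= lx i) ->
  (forall i j : 'I_m, (i <= j)%N -> ly j <= ly i) ->
  (forall v, qf X v <= qf Y v + c * nv v) -> lx i <= ly i + c.
Proof.
move=> sX sY dx dy H.
have [UUx _ _] := sX; have [UUy _ _] := sY.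
pose S1 := (pid_mx i.+1 : 'M[C]_m) *m Ux; pose S2 := copid_mx i *m Uy.
have r1 : \rank S1 = i.+1.
  by rewrite mxrankMfree ?row_free_unit ?spec_unit // rank_pid_mx.
have r2 : \rank S2 = (m - i)%N.
  by rewrite mxrankMfree ?row_free_unit ?spec_unit // rank_copid_mx // ltnW.
have capnz : (S1 :&: S2)%MS != 0.
  rewrite -mxrank_eq0; have := mxrank_sum_cap S1 S2; rewrite r1 r2.
  have := rank_leq_col (S1 + S2)%MS; have := ltn_ord i; lia.
have [k nzk] : exists k, row k (S1 :&: S2)%MS != 0.
  case: (pickP (fun k => row k (S1 :&: S2)%MS != 0)) => [k nzk | all0].
    by exists k.
  exfalso; move/negP: capnz; apply; apply/eqP/row_matrixP => k.
  by move/negbFE: (all0 k) => /eqP ->; rewrite row0.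
set v := row k (S1 :&: S2)%MS in nzk.
have [a1 v1] : exists a, v = a *m S1.
  by apply/submxP; apply: submx_trans (row_sub k _) (capmxSl _ _).
have [a2 v2] : exists a, v = a *m S2.
  by apply/submxP; apply: submx_trans (row_sub k _) (capmxSr _ _).
rewrite /S1 mulmxA in v1; rewrite /S2 mulmxA in v2.
set w1 := a1 *m pid_mx i.+1 in v1; set w2 := a2 *m copid_mx i in v2.
have n1 : nv v = \sum_j w1 0 j * conjC (w1 0 j) by rewrite v1 nv_spec.
have n2 : nv v = \sum_j w2 0 j * conjC (w2 0 j) by rewrite v2 nv_spec.
have lo : lx i * nv v <= qf X v.
  rewrite n1 v1 (qf_spec _ sX) mulr_sumr; apply: ler_sum => j _.
  rewrite /w1 mul_pid_entry; case: ifP => hj.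
    by apply: ler_wpM2r; [exact: mul_conjC_ge0 | apply: dx].
  by rewrite !mul0r !mulr0.
have up : qf Y v <= ly i * nv v.
  rewrite n2 v2 (qf_spec _ sY) mulr_sumr; apply: ler_sum => j _.
  rewrite /w2 mul_copid_entry; case: ifP => hj.
    by rewrite !mul0r !mulr0.
  by apply: ler_wpM2r; [exact: mul_conjC_ge0 | apply: dy; rewrite leqNgt hj].
have nvp := nv_gt0 nzk.
rewrite -(ler_pM2r nvp) mulrDl.
apply: le_trans lo _; apply: le_trans (H v) _; exact: lerD.
Qed.


Lemma herm_decomp m (M : 'M[C]_m) : herm M ->
  let P := spectralmx M in let d := spectral_diag M in
  [/\ P *m P^t* = 1%:M, P^t* *m P = 1%:M, M = P^t* *m diag_mx d *m P,
   (forall i, d 0 i \is Num.real) &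
   char_poly M = \prod_(i < m) ('X - (d 0 i)%:P)].
Proof.
move=> hM P d.
have Mn : M \is normalmx by apply/normalmxP; rewrite hM.
have PU : P \is unitarymx := spectral_unitarymx M.
have /orthomx_spectralP eqM := Mn.
have iP : invmx P = P^t* by rewrite invmx_unitary.
have Pu : P \in unitmx by apply: unitarymx_unit.
split.
- exact/unitarymxP.
- by rewrite -iP mulVmx.
- by rewrite -iP.
- have Mh : M \is hermsymmx by apply/is_hermitianmxP; rewrite expr0 scale1r hM.
  by have /mxOverP H := hermitian_spectral_diag_real Mh; move=> i; apply: H.
- rewrite eqM char_poly_similar // char_poly_trig ?diag_mx_is_trig //.
  by apply: eq_bigr => i _; rewrite !mxE eqxx mulr1n.
Qed.

Lemma spec_of_eigd m (M : 'M[C]_m) l : herm M -> eigd M l -> exists U, spec M U l.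
Proof.
move=> hM [lr ld lc]; have [PP PtP eqM dr dc] := herm_decomp hM.
set P := spectralmx M in PP PtP eqM; set d := spectral_diag M in eqM dr dc.
have : perm_eq [seq d 0 i | i <- enum 'I_m] (map_tuple l (ord_tuple m)).
  apply: prod_XsubC_eq; rewrite /=.
  have e1 : \prod_(x <- [seq d 0 i | i <- enum 'I_m]) ('X - x%:P) =
    \prod_(i < m) ('X - (d 0 i)%:P) by rewrite big_map big_enum.
  have e2 : \prod_(x <- [seq l i | i <- enum 'I_m]) ('X - x%:P) =
    \prod_(i < m) ('X - (l i)%:P) by rewrite big_map big_enum.
  by rewrite e1 e2 -dc -lc.
case/tuple_permP => p /(congr1 (fun s => nth 0 s)) E.
have dE : forall j, d 0 j = l (p j).
  move=> j; have := congr1 (fun f => f (nat_of_ord j)) E => /=.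
  rewrite (nth_map j) ?size_enum_ord // nth_ord_enum.
  rewrite (nth_map j) ?size_enum_ord // nth_ord_enum.
  by rewrite tnth_map tnth_ord_tuple.
exists (row_perm (p^-1)%g P); split.
- apply/matrixP => a b; rewrite entry_mul_tC.
  have := congr1 (fun X : 'M[C]_m => X ((p^-1)%g a) ((p^-1)%g b)) PP.
  rewrite /= entry_mul_tC [in RHS]mxE (inj_eq perm_inj) mxE => <-.
  by apply: eq_bigr => k _; rewrite !mxE.
- apply/matrixP => a b; rewrite entry_tC_mul.
  have := congr1 (fun X : 'M[C]_m => X a b) PtP; rewrite /= entry_tC_mul => <-.
  rewrite (reindex_inj (@perm_inj _ p)) /=; apply: eq_bigr => k _.
  by rewrite !mxE permK.
- have dd : d = \row_i d 0 i by apply/rowP => i; rewrite mxE.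
  apply/matrixP => a b; rewrite [RHS]entry_tCdiag eqM dd entry_tCdiag.
  rewrite (reindex_inj (@perm_inj _ (p^-1)%g)) /=; apply: eq_bigr => k _.
  by rewrite !mxE dE permKV.
Qed.


Lemma eigd_exists m (M : 'M[C]_m) : herm M -> exists l, eigd M l.
Proof.
move=> hM; have [PP PtP eqM dr dc] := herm_decomp hM.
set d := spectral_diag M in eqM dr dc.
pose r := fun x y : C => 'Re y <= 'Re x.
have rt : transitive r by move=> x y z; rewrite /r => h1 h2; apply: le_trans h2 h1.
have rr : reflexive r by move=> x; rewrite /r.
have rtot : total r.
  by move=> x y; rewrite /r; apply: real_leVge; apply: Creal_Re.
pose s := [seq d 0 i | i <- enum 'I_m].
pose ss := sort r s.
have sz : size ss = m by rewrite size_sort size_map size_enum_ord.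
have sreal : forall x, x \in ss -> x \is Num.real.
  move=> x; rewrite mem_sort => /mapP [i _ ->]; exact: dr.
exists (fun i : 'I_m => nth 0 ss i); split.
- by move=> i; apply: sreal; rewrite mem_nth // sz.
- move=> i j ij.
  have := sorted_leq_nth rt rr 0 (sort_sorted rtot s).
  move=> /(_ i j); rewrite !inE sz !ltn_ord => /(_ isT isT ij).
  rewrite /r.
  have /Creal_ReP -> : nth 0 ss i \is Num.real by apply: sreal; rewrite mem_nth // sz.
  by have /Creal_ReP -> : nth 0 ss j \is Num.real by apply: sreal; rewrite mem_nth // sz.
- rewrite dc.
  have -> : \prod_(i < m) ('X - (d 0 i)%:P) = \prod_(x <- s) ('X - x%:P).
    by rewrite big_map big_enum.
  rewrite -(perm_big _ (permEl (perm_sort r s))) (big_nth 0) sz big_mkord.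
  by [].
Qed.

Lemma trace_spec m (M U : 'M[C]_m) l : spec M U l -> \tr M = \sum_i l i.
Proof.
case=> UU _ ->; rewrite mxtrace_mulC mulmxA UU mul1mx mxtrace_diag.
by apply: eq_bigr => i _; rewrite mxE.
Qed.


Lemma qfD m (X Y : 'M[C]_m) v : qf (X + Y) v = qf X v + qf Y v.
Proof. by rewrite /qf mulmxDr mulmxDl mxE. Qed.

Lemma spec_all m (M U : 'M[C]_m) l (v : 'rV[C]_m) : spec M U l ->
  qf M v = \sum_j l j * ((v *m U^t*) 0 j * conjC ((v *m U^t*) 0 j)) /\
  nv v = \sum_j ((v *m U^t*) 0 j * conjC ((v *m U^t*) 0 j)).
Proof.
move=> sM; have [UU UtU _] := sM.
set w := v *m U^t*.
have vw : v = w *m U by rewrite /w -mulmxA UtU mulmx1.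
rewrite vw; split; first exact: qf_spec.
exact: nv_spec.
Qed.

Lemma herm_spec m (M U : 'M[C]_m) l : (forall i, l i \is Num.real) -> spec M U l -> herm M.
Proof.
move=> lr [_ _ ->]; rewrite /herm !trC_mul trmxCK -mulmxA; congr (_ *m _).
rewrite tr_diag_mx map_diag_mx; congr (diag_mx _ *m _).
by apply/rowP => j; rewrite !mxE; apply/CrealP.
Qed.

Lemma hermD m (X Y : 'M[C]_m) : herm X -> herm Y -> herm (X + Y).
Proof. by rewrite /herm => hX hY; rewrite linearD /= map_mxD hX hY. Qed.


Lemma core m (A B : 'M[C]_m) a b e : herm A -> herm B ->
  eigd A a -> eigd B b -> eigd (A + B) e ->
  forall S : {set 'I_m},
  \sum_(i in S) (e i - a i) <= \sum_(j < m | (j < #|S|)%N) b j.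
Proof.
move=> hA hB eA eB eE S.
have [br bd _] := eB.
have [Ub sB] := spec_of_eigd hB eB.
have [UUb UtUb _] := sB.
have [Ue sE] := spec_of_eigd (hermD hA hB) eE.
have [Ua sA] := spec_of_eigd hA eA.
have ad : forall i j : 'I_m, (i <= j)%N -> a j <= a i by case: eA.
have ed : forall i j : 'I_m, (i <= j)%N -> e j <= e i by case: eE.
case: (posnP #|S|) => [S0 | Spos].
  by rewrite (cards0_eq S0) big_set0 big_pred0 // => j; rewrite cards0.
have km : (#|S| <= m)%N by rewrite -[m in (_ <= m)%N]card_ord max_card.
have [t' Sk] : exists t', #|S| = t'.+1 by exists #|S|.-1; rewrite prednK.
rewrite Sk in km *.
pose t := Ordinal km.
pose mu := b t.
pose p := fun j : 'I_m => if (j <= t')%N then b j - mu else 0.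
have pr : forall j, p j \is Num.real.
  by move=> j; rewrite /p; case: ifP => _; [apply: rpredB; apply: br | apply: rpred0].
have pge : forall j, 0 <= p j.
  move=> j; rewrite /p; case: ifP => h //; rewrite subr_ge0; exact: bd.
pose P := Ub^t* *m diag_mx (\row_j p j) *m Ub.
have sP : spec P Ub p by [].
have hP := herm_spec pr sP.
have hAP := hermD hA hP.
have [f eF] := eigd_exists hAP.
have [Uf sF] := spec_of_eigd hAP eF.
have fd : forall i j : 'I_m, (i <= j)%N -> f j <= f i by case: eF.
have H1 : forall i, e i <= f i + mu.
  move=> i; apply: (weyl i sE sF ed fd) => v.
  rewrite !qfD -addrA lerD2l.
  have [-> ->] := spec_all v sP; have [-> _] := spec_all v sB.
  rewrite mulr_sumr -big_split /=; apply: ler_sum => j _.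
  rewrite -mulrDl; apply: ler_wpM2r; first exact: mul_conjC_ge0.
  rewrite /p; case: ifP => h; first by rewrite subrK.
  by rewrite add0r; apply: bd; rewrite /= ltnW // ltnNge h.
have H2 : forall i, a i <= f i + 0.
  move=> i; apply: (weyl i sA sF ad fd) => v.
  rewrite mul0r addr0 qfD lerDl.
  have [-> _] := spec_all v sP.
  by apply: sumr_ge0 => j _; apply: mulr_ge0 => //; exact: mul_conjC_ge0.
have tr : \sum_i f i = \sum_i a i + \sum_i p i.
  by rewrite -(trace_spec sF) mxtraceD (trace_spec sA) (trace_spec sP).
have sp : \sum_i p i = \sum_(j < m | (j < t'.+1)%N) b j - mu *+ t'.+1.
  rewrite (bigID (fun j : 'I_m => (j < t'.+1)%N)) /=.
  rewrite [X in _ + X]big1 => [|j]; last by rewrite /p ltnS => /negbTE ->.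
  have cm : mu *+ t'.+1 = \sum_(i < m | (i < t'.+1)%N) mu.
    by rewrite -(big_ord_widen m (fun _ => mu) km) sumr_const card_ord.
  rewrite addr0 cm -sumrB; apply: eq_bigr => j; by rewrite /p ltnS => ->.
apply: (le_trans (y := \sum_(i in S) (f i + mu - a i))).
  by apply: ler_sum => i _; rewrite lerD2r.
have -> : \sum_(i in S) (f i + mu - a i) = \sum_(i in S) (f i - a i) + mu *+ t'.+1.
  by rewrite -Sk -sumr_const -big_split /=; apply: eq_bigr => i _; rewrite addrAC.
rewrite -lerBrDr.
apply: (le_trans (y := \sum_i (f i - a i))).
  rewrite [X in _ <= X](bigID (fun i => i \in S)) /= lerDl.
  by apply: sumr_ge0 => i _; rewrite subr_ge0 -[f i]addr0.
by rewrite sumrB tr addrC addKr sp.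
Qed.

End Core.

Lemma core_total (C : numClosedFieldType) m (A B : 'M[C]_m) a b e : herm A -> herm B ->
  eigd A a -> eigd B b -> eigd (A + B) e ->
  \sum_i e i = \sum_i a i + \sum_i b i.
Proof.
move=> hA hB eA eB eE.
have [Ub sB] := spec_of_eigd hB eB.
have [Ue sE] := spec_of_eigd (hermD hA hB) eE.
have [Ua sA] := spec_of_eigd hA eA.
by rewrite -(trace_spec sE) mxtraceD (trace_spec sA) (trace_spec sB).
Qed.

Section Transfer.
Variable R : rcfType.
Local Open Scope complex_scope.

Definition toC m (M : 'M[R]_m) : 'M[R[i]]_m := map_mx (real_complex R) M.

Lemma toC_herm m (M : 'M[R]_m) : M^T = M -> herm (toC M).
Proof.
move=> sM; rewrite /herm /toC; apply/matrixP => i j; rewrite !mxE.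
rewrite conj_Creal; last by apply/complex_realP; eexists.
by have := congr1 (fun X : 'M[R]_m => X i j) sM; rewrite /= mxE => ->.
Qed.

Lemma toC_eigd m (M : 'M[R]_m) l : 
  (forall i j : 'I_m, (i <= j)%N -> l j <= l i) ->
  char_poly M = \prod_(i < m) ('X - (l i)%:P) ->
  eigd (toC M) (fun i => (l i)%:C).
Proof.
move=> ld lc; split.
- by move=> i; apply/complex_realP; eexists.
- by move=> i j ij; rewrite lecR ld.
- rewrite /toC -map_char_poly lc rmorph_prod; apply: eq_bigr => i _.
  by rewrite rmorphB /= map_polyX map_polyC.
Qed.

End Transfer.

Lemma abel (R : realDomainType) (c y : nat -> R) n :
  (forall k, (k.+1 < n)%N -> c k.+1 <= c k) ->
  (forall k, (k <= n)%N -> \sum_(i < k) y i <= 0) ->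
  \sum_(i < n) c i * y i <= c n.-1 * \sum_(i < n) y i.
Proof.
elim: n => [|n IH] hc hy; first by rewrite !big_ord0 mulr0.
rewrite !big_ord_recr /=.
have IH' := IH (fun k hk => hc k (ltn_trans hk (ltnSn _)))
               (fun k hk => hy k (leqW hk)).
have Y := hy n (leqnSn _).
suff : c n.-1 * \sum_(i < n) y i <= c n * \sum_(i < n) y i.
  move=> h; rewrite mulrDr; apply: lerD => //; exact: le_trans IH' h.
case: n {IH IH'} hc hy Y => [|n] hc hy Y; first by [].
have h := hc n (ltnSn _); rewrite /=; nra.
Qed.


Theorem lemma6p1 (R : rcfType) (m : nat) (A B : 'M[R]_m)
    (lA lB lAB : 'I_m -> R) (c : 'I_m -> R) (sigma : 'S_m) :
  symmetric_mx A -> symmetric_mx B ->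
  eigvals_desc A lA -> eigvals_desc B lB -> eigvals_desc (A + B) lAB ->
  (forall i j : 'I_m, (i <= j)%N -> c j <= c i) ->
  \sum_(j < m) c (sigma j) * lAB j <=
    \sum_(j < m) c (sigma j) * lA j + \sum_(j < m) c j * lB j.
Proof.
move=> sA sB [ad ac] [bd bc] [ed ec] hc.
have hA := toC_herm sA; have hB := toC_herm sB.
have eA := toC_eigd ad ac; have eB := toC_eigd bd bc.
have eE : eigd (toC A + toC B) (fun i => (lAB i)%:C)%C.
  by rewrite /toC -map_mxD; apply: toC_eigd.
have core' : forall S : {set 'I_m},
    \sum_(i in S) (lAB i - lA i) <= \sum_(j < m | (j < #|S|)%N) lB j.
  move=> S; have := core hA hB eA eB eE S.
  have -> : \sum_(i in S) ((lAB i)%:C - (lA i)%:C)%C =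
     (\sum_(i in S) (lAB i - lA i))%:C%C.
    by rewrite rmorph_sum; apply: eq_bigr => i _; rewrite rmorphB.
  by rewrite -rmorph_sum lecR.
have tot : \sum_i lAB i = \sum_i lA i + \sum_i lB i.
  have := core_total hA hB eA eB eE.
  by rewrite -!rmorph_sum -rmorphD => /complexI.
set d := fun j => lAB j - lA j.
rewrite -lerBlDl -sumrB.
under eq_bigr => j _ do rewrite -mulrBr -/(d j).
rewrite (reindex_inj (@perm_inj _ (sigma^-1)%g)) /=.
under eq_bigr => i _ do rewrite permKV.
set x := fun i => d ((sigma^-1)%g i).
rewrite -subr_le0 -sumrB.
under eq_bigr => i _ do rewrite -mulrBr.
have [m0|mpos] := posnP m.
  by rewrite big1 // => i; have := ltn_ord i; lia.
pose i0 := Ordinal mpos.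
pose cN := fun k => c (insubd i0 k).
pose yN := fun k => x (insubd i0 k) - lB (insubd i0 k).
have -> : \sum_(i < m) c i * (x i - lB i) = \sum_(i < m) cN i * yN i.
  by apply: eq_bigr => i _; rewrite /cN /yN valKd.
have tot' : \sum_(i < m) yN i = 0.
  rewrite (eq_bigr (fun i => x i - lB i)); last by move=> i _; rewrite /yN valKd.
  rewrite sumrB /x (reindex_inj (@perm_inj _ sigma)) /=.
  under eq_bigr => i _ do rewrite permK.
  by rewrite /d sumrB tot addrAC addrK subrr.
apply: le_trans (abel (c := cN) (y := yN) (n := m) _ _) _.
- by move=> k hk; rewrite /cN; apply: hc; rewrite !val_insubd hk (ltnW hk).
- move=> k km.
  rewrite (big_ord_widen m yN km).
  rewrite (eq_bigr (fun i : 'I_m => x i - lB i)); last by move=> i _; rewrite /yN valKd.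
  rewrite sumrB subr_le0.
  pose S := [set j : 'I_m | (sigma j < k)%N].
  have cS : #|S| = k.
    rewrite -sum1_card (reindex_inj (@perm_inj _ (sigma^-1)%g)) /=.
    rewrite (eq_bigl (fun i : 'I_m => (i < k)%N)); last first.
      by move=> i; rewrite inE permKV.
    by rewrite -(big_ord_widen m (fun _ => 1%N) km) sum1_card card_ord.
  rewrite -{2}cS; apply: le_trans (core' S); rewrite le_eqVlt; apply/orP; left.
  rewrite /x (reindex_inj (@perm_inj _ sigma)) /=; apply/eqP.
  by apply: eq_big => [i|i _]; rewrite ?inE ?permK.
- by rewrite tot' mulr0.
Qed.
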